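(* Let $k\geq 1$ and $n\geq k+2$ be integers. Then the $k$-distance matrices of all $k$-trees with $n$ vertices are equivalent to one another: for any two $k$-trees $T,T'$ with $n$ vertices there exist square integer matrices ${\sf P},{\sf Q}$ with $\det {\sf P},\det{\sf Q}\in\{\pm1\}$ such that ${\sf D}^k(T)={\sf P}\,{\sf D}^k(T')\,{\sf Q}$.
   Context: A $k$-tree is either the complete graph on $k$ vertices, or a graph obtained from a smaller $k$-tree by adding a new vertex joined by $k$ edges to all vertices of a $k$-clique (complete subgraph on $k$ vertices). In a $k$-tree $T$, for $k$-cliques $\tau,\tau'$, a $k$-walk from $\tau$ to $\tau'$ is a sequence $\tau_1\sigma_1\tau_2\sigma_2\cdots\tau_l$ with $\tau_1=\tau$, $\tau_l=\tau'$, the $\tau_i$ being $k$-cliques and $\sigma_i$ a $(k+1)$-clique containing both $\tau_i$ and $\tau_{i+1}$; the $k$-distance $\operatorname{dist}^k(\tau,\tau')$ is the number of $(k+1)$-cliques in a shortest such walk. If $T$ has $c$ $k$-cliques $\tau_1,\dots,\tau_c$ (in any fixed order), the $k$-distance matrix ${\sf D}^k(T)$ is the $c\times c$ integer matrix with $(i,j)$-entry $0$ if $i=j$ and $\operatorname{dist}^k(\tau_i,\tau_j)$ otherwise. (All $k$-trees with $n$ vertices have the same number $k(n-k)+1$ of $k$-cliques.) *)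

(* Defs.v *)
From mathcomp Require Import all_boot all_order all_algebra.
Set Implicit Arguments. Unset Strict Implicit. Unset Printing Implicit Defensive.
Import GRing.Theory.

Section KTrees.
Variables (T : finType) (e : rel T).

Definition clique (A : {set T}) : bool :=
  [forall x in A, forall y in A, (x != y) ==> e x y].

Definition kclique (k : nat) (A : {set T}) : bool := (#|A| == k) && clique A.

Definition kstep (k : nat) (A B : {set T}) : bool :=
  [exists S : {set T}, [&& kclique k.+1 S, A \subset S & B \subset S]].

(* There is a k-walk  A = tau_1 sigma_1 ... tau_{m+1} = B  using exactly m
   (k+1)-cliques (all tau_i being k-cliques). *)
Definition kwalk (k : nat) (A B : {set T}) (m : nat) : bool :=
  [exists s : m.-tuple {set T},
     [&& kclique k A, all (kclique k) s, path (kstep k) A s & last A s == B]].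

(* k-distance: least m such that a k-walk with m (k+1)-cliques exists.
   (A shortest walk never repeats a k-clique, so m < #|{set T}|; the
   default value for unreachable pairs is irrelevant in k-trees.) *)
Definition kdist (k : nat) (A B : {set T}) : nat :=
  find (kwalk k A B) (iota 0 #|{set T}|).

(* k-trees, as induced subgraphs on a vertex set V: either V is a k-clique
   (complete graph on k vertices), or V = v |: W where W induces a k-tree
   and the neighbours of v in W form exactly a k-clique C. *)
Inductive ktree_on (k : nat) : {set T} -> Prop :=
| ktree_base V : kclique k V -> ktree_on k V
| ktree_add W v : ktree_on k W -> v \notin W ->
    (exists2 C : {set T}, kclique k C && (C \subset W) &
       forall u, u \in W -> e v u = (u \in C)) ->
    ktree_on k (v |: W).

Definition is_ktree (k : nat) : Prop := ktree_on k [set: T].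

Definition kclique_enum (k c : nat) (tau : 'I_c -> {set T}) : Prop :=
  injective tau /\ (forall A : {set T}, kclique k A = (A \in codom tau)).

Definition kdistmx (k c : nat) (tau : 'I_c -> {set T}) : 'M[int]_c :=
  \matrix_(i, j) (if i == j then 0%R else Posz (kdist k (tau i) (tau j))).

End KTrees.

(* Main.v *)
Require Import Defs.
From mathcomp Require Import all_boot all_order all_algebra.
From mathcomp Require Import zify perm.
Import GRing.Theory.
Set Implicit Arguments. Unset Strict Implicit. Unset Printing Implicit Defensive.

Section Comb.
Variables (T : finType) (e : rel T) (esym : symmetric e) (k : nat) (hk : 0 < k).

Definition kcl (W A : {set T}) := kclique e k A && (A \subset W).

Definition stepW (W A B : {set T}) : bool :=
  [exists S : {set T}, [&& kclique e k.+1 S, S \subset W, A \subset S & B \subset S]].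

Fixpoint walk (W : {set T}) (m : nat) (A B : {set T}) : bool :=
  match m with
  | 0 => kcl W A && (A == B)
  | m'.+1 => kcl W A && [exists Y, stepW W A Y && walk W m' Y B]
  end.

Definition isdist W A B d := walk W d A B /\ forall m, walk W m A B -> d <= m.

Definition distW W A B := find (fun m => walk W m A B) (iota 0 #|{set T}|).

Lemma stepW_sym W A B : stepW W A B = stepW W B A.
Proof.
by apply/existsP/existsP => -[S /and4P[h1 h2 h3 h4]]; exists S; rewrite h1 h2 h3 h4.
Qed.

Lemma walk_kcl W m A B : walk W m A B -> kcl W A && kcl W B.
Proof.
elim: m A => [|m IH] A /=; first by case/andP => hA /eqP hB; rewrite -hB hA.
by case/andP => hA /existsP [Y /andP [_ /IH /andP[_ ->]]]; rewrite hA.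
Qed.

Lemma walkSr W m A B :
  walk W m.+1 A B = [exists Y, [&& walk W m A Y, stepW W Y B & kcl W B]].
Proof.
elim: m A => [|m IH] A.
  apply/idP/existsP => /=.
    case/andP => hA /existsP [Y /and3P [hs hY /eqP <-]].
    by exists A; rewrite hA eqxx hs hY.
  case=> Y /and3P[/andP[hA /eqP <-] hs hB].
  by rewrite /= hA /=; apply/existsP; exists B; rewrite hs hB eqxx.
rewrite -[walk W m.+2 A B]/(kcl W A && [exists Y, stepW W A Y && walk W m.+1 Y B]).
apply/idP/existsP.
  case/andP => hA /existsP [Y /andP [hs]]; rewrite IH => /existsP [Z /and3P[h1 h2 h3]].
  exists Z; rewrite h2 h3 !andbT /= hA /=; apply/existsP; exists Y; by rewrite hs.
case=> Z /and3P [/andP [hA /existsP [Y /andP [hs hw]]] h2 h3].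
rewrite hA andTb; apply/existsP; exists Y; rewrite hs IH andTb; apply/existsP; exists Z.
by rewrite h2 h3 !andbT; exact: hw.
Qed.

Lemma walk_sym W m A B : walk W m A B -> walk W m B A.
Proof.
elim: m A B => [|m IH] A B /=.
  by case/andP => hA /eqP <-; rewrite hA eqxx.
case/andP => hA /existsP [Y /andP [hs hw]].
rewrite -/(walk W m.+1 B A) walkSr; apply/existsP; exists Y.
by rewrite IH // stepW_sym hs hA.
Qed.

Lemma walk_symE W m A B : walk W m A B = walk W m B A.
Proof. by apply/idP/idP; apply: walk_sym. Qed.

Lemma distW_sym W A B : distW W A B = distW W B A.
Proof. by apply: eq_find => m; rewrite walk_symE. Qed.

Lemma find_iota_eq (P : pred nat) N d :
  P d -> (forall m, m < d -> ~~ P m) -> d < N -> find P (iota 0 N) = d.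
Proof.
move=> hd hlt hN.
rewrite -(subnKC (ltnW hN)) iotaD find_cat size_iota.
have -> : has P (iota 0 d) = false.
  apply/hasPn => m; rewrite mem_iota add0n => /andP [_]; exact: hlt.
rewrite add0n; have : 0 < N - d by rewrite subn_gt0.
by case: (N - d) => [|r] //= _; rewrite hd addn0.
Qed.

Lemma card_sets_ge : #|T| <= #|{set T}|.
Proof.
have inj : injective (fun x : T => [set x]) by move=> x y /set1_inj.
by rewrite -(card_codom inj); apply: max_card.
Qed.

Lemma distW_eq W A B d : isdist W A B d -> d < #|T| -> distW W A B = d.
Proof.
move=> [hw hmin] hd; apply: find_iota_eq => //.
  move=> m hm; apply/negP => /hmin; by rewrite leqNgt hm.
exact: leq_trans hd card_sets_ge.
Qed.

Lemma isdist_sym W A B d : isdist W A B d -> isdist W B A d.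
Proof. by move=> [h1 h2]; split; [rewrite walk_symE | move=> m; rewrite walk_symE; apply: h2]. Qed.

Lemma isdist0 W A : kcl W A -> isdist W A A 0.
Proof. by move=> hA; split => //=; rewrite hA eqxx. Qed.

Lemma walk_mono (W W' : {set T}) m A B : W \subset W' -> walk W m A B -> walk W' m A B.
Proof.
move=> sW; elim: m A => [|m IH] A /=.
  by rewrite /kcl => /andP[/andP [-> /subset_trans ->]].
rewrite /kcl => /andP[/andP [-> /subset_trans -> //] /existsP [Y /andP [hs hw]]] /=.
apply/existsP; exists Y; rewrite IH // andbT.
case/existsP: hs => S /and4P [h1 h2 h3 h4]; apply/existsP; exists S.
by rewrite h1 h3 h4 (subset_trans h2 sW).
Qed.

End Comb.

Section Mat.
Local Open Scope ring_scope.
Variable k : nat.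

Definition cnt (t : nat) : nat := (1 + t * k)%N.

Fixpoint can (t : nat) : nat -> nat -> int :=
  match t with
  | 0 => fun _ _ => 0
  | t'.+1 => fun i j =>
      if (i < cnt t')%N then (if (j < cnt t')%N then can t' i j else (i == 0)%:R)
      else if (j < cnt t')%N then (j == 0)%:R else (if i == j then -2 else -1)
  end.

Definition unimod c (M : 'M[int]_c) := \det M = 1 \/ \det M = -1.
Definition e0 c : 'cV[int]_c := \col_i ((i == 0 :> nat)%:R).
Definition onev c : 'cV[int]_c := const_mx 1.
Definition canmx c t : 'M[int]_c := \matrix_(i, j) can t i j.

Definition good c (M : 'M[int]_c) t := exists P Q : 'M[int]_c,
  [/\ unimod P, unimod Q, P *m onev c = e0 c, Q^T *m onev c = e0 c &
      P *m M *m Q = canmx c t].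

Lemma unimodM c (P Q : 'M[int]_c) : unimod P -> unimod Q -> unimod (P *m Q).
Proof.
rewrite /unimod det_mulmx => [[] -> [] ->]; rewrite ?mulr1 ?mul1r ?mulrNN ?mulr1;
  by [left | right].
Qed.

Lemma unimod_tr c (P : 'M[int]_c) : unimod P -> unimod P^T.
Proof. by rewrite /unimod det_tr. Qed.

Lemma unimod_perm c (s : 'S_c) : unimod (perm_mx s).
Proof. by rewrite /unimod det_perm; case: (odd_perm s); [right | left]; rewrite ?expr1 ?expr0. Qed.

Lemma perm_mxE' c (s : 'S_c) i j : (perm_mx s : 'M[int]_c) i j = (s i == j)%:R.
Proof. by rewrite /perm_mx /row_perm !mxE. Qed.

Lemma perm_onev c (s : 'S_c) : perm_mx s *m onev c = onev c.
Proof.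
apply/matrixP => i j; rewrite !mxE (bigD1 (s i)) //= big1 => [|l /negPf sl].
  by rewrite perm_mxE' eqxx !mxE mulr1 addr0.
by rewrite perm_mxE' eq_sym sl mul0r.
Qed.

Lemma good_perm c (s : 'S_c) (M : 'M[int]_c) t :
  good (\matrix_(i, j) M (s i) (s j)) t -> good M t.
Proof.
case=> P [Q [uP uQ hP hQ hM]].
exists (P *m perm_mx s), ((perm_mx s)^T *m Q); split.
- by apply: unimodM => //; apply: unimod_perm.
- by apply: unimodM => //; apply/unimod_tr/unimod_perm.
- by rewrite -mulmxA perm_onev.
- by rewrite trmx_mul trmxK -mulmxA perm_onev.
have hperm : perm_mx s *m M *m (perm_mx s)^T = \matrix_(i, j) M (s i) (s j).
  apply/matrixP => i j; rewrite !mxE.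
  rewrite (bigD1 (s j)) //= big1 => [|l /negPf sl]; last first.
    by rewrite [X in _ * X]mxE perm_mxE' eq_sym sl mulr0.
  rewrite [X in _ * X]mxE perm_mxE' eqxx mulr1 addr0 !mxE.
  rewrite (bigD1 (s i)) //= big1 => [|l /negPf sl]; last first.
    by rewrite perm_mxE' eq_sym sl mul0r.
  by rewrite perm_mxE' eqxx mul1r addr0.
by rewrite -hM -hperm !mulmxA.
Qed.


Lemma e0_block c0 : (0 < c0)%N -> col_mx (e0 c0) (0 : 'cV[int]_k) = e0 (c0 + k).
Proof.
move=> hc; apply/matrixP => i j; rewrite -(splitK i); case: (split i) => a.
  by rewrite col_mxEu !mxE.
by rewrite col_mxEd !mxE /= addn_eq0 eqn0Ngt hc.
Qed.

Lemma mul_const_e0 c0 (P0 : 'M[int]_c0) : P0 *m onev c0 = e0 c0 ->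
  P0 *m (const_mx 1 : 'M[int]_(c0, k)) = \matrix_(i, j) (i == 0 :> nat)%:R.
Proof.
move=> hP; apply/matrixP => i j.
have := congr1 (fun M : 'cV[int]_c0 => M i 0) hP; rewrite !mxE => <-.
by apply: eq_bigr => l _; rewrite !mxE.
Qed.

Lemma good_step c0 t (hc0 : c0 = cnt t) (D0 : 'M[int]_c0) (iC : 'I_c0)
  (diag : D0 iC iC = 0) :
  good D0 t ->
  good (block_mx D0 (\matrix_(i < c0, j < k) (D0 i iC + 1))
                    (\matrix_(i < k, j < c0) (D0 iC j + 1))
                    (\matrix_(i < k, j < k) ((i != j)%:R)) : 'M_(c0 + k)) t.+1.
Proof.
case=> P0 [Q0 [uP uQ hP hQ hM]].
set L : 'M[int]_(k, c0) := \matrix_(i, j) - ((j == iC)%:R).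
set A : 'M[int]_(c0 + k) := block_mx 1%:M 0 L 1%:M.
set Dsig := block_mx _ _ _ _.
have hLM n (M : 'M[int]_(c0, n)) : L *m M = \matrix_(i, j) - M iC j.
  apply/matrixP => i j; rewrite !mxE (bigD1 iC) //= big1 => [|l /negPf hl].
    by rewrite !mxE eqxx mulN1r addr0.
  by rewrite !mxE hl oppr0 mul0r.
have hML m (M : 'M[int]_(m, c0)) : M *m L^T = \matrix_(i, j) - M i iC.
  apply/matrixP => i j; rewrite !mxE (bigD1 iC) //= big1 => [|l /negPf hl].
    by rewrite !mxE eqxx mulrN1 addr0.
  by rewrite !mxE hl oppr0 mulr0.
have key : A *m Dsig *m A^T = block_mx D0 (const_mx 1) (const_mx 1)
              (\matrix_(i, j) (if i == j then -2 else -1)).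
  rewrite /A /Dsig tr_block_mx !trmx1 !trmx0 !mulmx_block !mul1mx !mul0mx !mulmx1 !mulmx0.
  rewrite ?addr0 ?add0r !hLM !hML.
  congr block_mx; apply/matrixP => i j; rewrite !mxE.
  - by rewrite addrA addNr add0r.
  - by rewrite addrA addNr add0r.
  - by rewrite diag; case: (i == j) => /=; lia.
have hc : (0 < c0)%N by rewrite hc0 /cnt.
have hA1 (R0 : 'M[int]_c0) : R0 *m onev c0 = e0 c0 ->
    block_mx R0 0 0 1%:M *m A *m onev (c0 + k) = e0 (c0 + k).
  move=> hR; rewrite /onev -col_mx_const -mulmxA /A !mul_block_col.
  rewrite !mul1mx !mul0mx !addr0 hLM.
  have -> : \matrix_(_, j) - (const_mx 1 : 'cV[int]_c0) iC j + const_mx 1 = (0 : 'cV[int]_k).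
    by apply/matrixP => a b; rewrite !mxE addNr.
  by rewrite addr0 -[const_mx 1]/(onev c0) hR e0_block.
have uA : unimod A by rewrite /unimod /A det_lblock !det1 mulr1; left.
have uB (R0 : 'M[int]_c0) : unimod R0 -> unimod (block_mx R0 0 0 1%:M).
  by rewrite /unimod det_ublock det1 mulr1.
exists (block_mx P0 0 0 1%:M *m A), (A^T *m block_mx Q0 0 0 1%:M); split.
- by apply: unimodM => //; apply: uB.
- by apply: unimodM; [apply: unimod_tr | apply: uB].
- exact: hA1.
- rewrite trmx_mul trmxK tr_block_mx !trmx0 trmx1; exact: hA1.
have -> : block_mx P0 0 0 1%:M *m A *m Dsig *m (A^T *m block_mx Q0 0 0 1%:M) =
    block_mx P0 0 0 1%:M *m (A *m Dsig *m A^T) *m block_mx Q0 0 0 1%:M.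
  by rewrite !mulmxA.
rewrite key !mulmx_block !mul0mx !mulmx0 !mul1mx !mulmx1 ?addr0 ?add0r hM.
rewrite mul_const_e0 //.
have -> : (const_mx 1 : 'M[int]_(k, c0)) *m Q0 = \matrix_(i, j) (j == 0 :> nat)%:R.
  apply/trmx_inj; rewrite trmx_mul.
  have -> : (const_mx 1 : 'M[int]_(k, c0))^T = const_mx 1 by apply/matrixP => a b; rewrite !mxE.
  rewrite mul_const_e0 //; by apply/matrixP => a b; rewrite !mxE.
apply/matrixP => i j.
rewrite -(splitK i) -(splitK j).
case: (split i) => a; case: (split j) => b => /=;
  rewrite ?block_mxEul ?block_mxEur ?block_mxEdl ?block_mxEdr /canmx !mxE /= -hc0 ?ltn_ord ?(ltnNge _ c0) ?leq_addr //=.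
by rewrite eqn_add2l.
Qed.

End Mat.

Section Inv.
Variables (T : finType) (e : rel T) (k : nat).
Implicit Types (W A B : {set T}).

Definition Kset W := [set A | kcl e k W A].
Definition enumW W c (tau : 'I_c -> {set T}) :=
  injective tau /\ forall A, (A \in Kset W) = (A \in codom tau).
Definition DmatW W c (tau : 'I_c -> {set T}) : 'M[int]_c :=
  \matrix_(i, j) (if i == j then 0%R else Posz (distW e k W (tau i) (tau j))).

Definition kinv W t :=
  [/\ #|W| = t + k, #|Kset W| = cnt k t,
   forall A B, kcl e k W A -> kcl e k W B -> exists2 d, isdist e k W A B d & d <= t
   & forall c (tau : 'I_c -> {set T}), enumW W tau -> good k (DmatW W tau) t].

Lemma distW_refl W A : 0 < k -> kcl e k W A -> distW e k W A A = 0.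
Proof.
move=> hk hA; apply: distW_eq; first exact: isdist0.
case/andP: hA => /andP [/eqP cA _] _.
by apply: leq_trans (max_card (mem A)); rewrite cA.
Qed.

Lemma DmatW_E W c (tau : 'I_c -> {set T}) i j : 0 < k -> enumW W tau ->
  DmatW W tau i j = Posz (distW e k W (tau i) (tau j)).
Proof.
move=> hk [_ htau]; rewrite mxE; case: eqP => // ->.
rewrite distW_refl //.
by have := htau (tau j); rewrite codom_f inE.
Qed.

Lemma card_enumW W c (tau : 'I_c -> {set T}) : enumW W tau -> c = #|Kset W|.
Proof.
case=> inj h; rewrite -[c]card_ord -(card_codom inj).
by apply: eq_card => A; rewrite h.
Qed.

End Inv.

Section Step.
Variables (T : finType) (e : rel T) (esym : symmetric e) (k : nat) (hk : 0 < k).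
Variables (W C : {set T}) (v : T) (hvW : v \notin W) (hC : kclique e k C)
  (hCW : C \subset W) (hN : forall u, u \in W -> e v u = (u \in C)).

Local Notation kcl := (kcl e k).
Local Notation stepW := (stepW e k).
Local Notation walk := (walk e k).
Local Notation isdist := (isdist e k).
Implicit Types (A B S Y : {set T}) (u w x : T).
Let W' := v |: W.
Definition X u := v |: (C :\ u).
Definition pi (A : {set T}) := if v \in A then C else A.

Lemma clique_sub A B : A \subset B -> clique e B -> clique e A.
Proof.
move=> sAB /forallP hB; apply/forallP => x; apply/implyP => xA.
apply/forallP => y; apply/implyP => yA.
by have /implyP/(_ (subsetP sAB x xA))/forallP/(_ y)/implyP/(_ (subsetP sAB y yA)) := hB x.
Qed.

Lemma vC : v \notin C.
Proof. by apply: contra hvW => /(subsetP hCW). Qed.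

Lemma eC u : u \in C -> e v u.
Proof. by move=> uC; rewrite hN ?uC // (subsetP hCW). Qed.

Lemma sigma_clique : kclique e k.+1 (v |: C).
Proof.
case/andP: hC => /eqP cC cl.
rewrite /kclique cardsU1 vC cC eqxx /=.
apply/forallP => x; apply/implyP; rewrite in_setU1 => hx.
apply/forallP => y; apply/implyP; rewrite in_setU1 => hy.
apply/implyP => xy.
case/orP: hx => [/eqP hx | xC].
  subst x; case/orP: hy => [/eqP yv | yC]; first by rewrite yv eqxx in xy.
  exact: eC.
case/orP: hy => [/eqP -> | yC]; first by rewrite esym; apply: eC.
by move/forallP: cl => /(_ x)/implyP/(_ xC)/forallP/(_ y)/implyP/(_ yC)/implyP/(_ xy).
Qed.

Lemma sigma_sub : v |: C \subset W'.
Proof. by rewrite /W' setUS. Qed.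

Lemma X_sub u : X u \subset v |: C.
Proof. by rewrite /X setUS // subD1set. Qed.

Lemma X_kcl u : u \in C -> kcl W' (X u).
Proof.
move=> uC; rewrite /kcl /kclique.
rewrite (subset_trans (X_sub u) sigma_sub) andbT.
rewrite (clique_sub (X_sub u)); last by case/andP: sigma_clique.
rewrite andbT /X cardsU1 in_setD1 negb_and (negPf vC) orbT /=.
case/andP: hC => /eqP cC _.
by rewrite -cC (cardsD1 u C) uC.
Qed.

Lemma kcl_W_W' A : kcl W A -> kcl W' A.
Proof. by rewrite /kcl => /andP [-> h]; rewrite (subset_trans h) // subsetUr. Qed.

Lemma kcl_notv A : kcl W A -> v \notin A.
Proof. by case/andP => _ /subsetP h; apply: contra hvW; apply: h. Qed.

Lemma sub_v S : clique e S -> S \subset W' -> v \in S -> S :\ v \subset C.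
Proof.
move=> cS sS vS; apply/subsetP => x; rewrite in_setD1 => /andP [xv xS].
have xW : x \in W.
  by move: (subsetP sS x xS); rewrite in_setU1 (negPf xv).
rewrite -hN //.
move/forallP: cS => /(_ v)/implyP/(_ vS)/forallP/(_ x)/implyP/(_ xS)/implyP.
by apply; rewrite eq_sym.
Qed.

Lemma kcl'_cases A : kcl W' A ->
  (v \notin A /\ kcl W A) \/ (exists2 u, u \in C & A = X u).
Proof.
case/andP => /andP [/eqP cA clA] sA.
case vA: (v \in A).
  right.
  have sAC := sub_v clA sA vA.
  have cA' : #|A :\ v| = k.-1 by move: (cardsD1 v A); rewrite vA cA => ->.
  case/andP: hC => /eqP cC _.
  have : ~~ (C \subset A :\ v).
    apply/negP => /subset_leq_card; rewrite cA' cC.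
    by rewrite leqNgt ltn_predL hk.
  case/subsetPn => u uC uA.
  exists u => //.
  have sAC' : A :\ v \subset C :\ u.
    apply/subsetP => x xA; rewrite in_setD1 (subsetP sAC x xA) andbT.
    by apply: contraNneq uA => <-.
  have : A :\ v == C :\ u.
    rewrite eqEcard sAC' /=.
    by rewrite cA' -cC (cardsD1 u C) uC.
  by rewrite /X => /eqP <-; rewrite setD1K.
left; split => //; rewrite /kcl /kclique cA eqxx clA /=.
apply/subsetP => x xA; move: (subsetP sA x xA); rewrite in_setU1.
by case: eqP => // xv; rewrite xv vA in xA.
Qed.

Lemma vX u : v \in X u.
Proof. by rewrite /X setU11. Qed.

Lemma X_inj : {in C &, injective X}.
Proof.
move=> u w uC wC hX; apply/eqP; apply/negP => /negP uw.
have : u \in X w by rewrite /X in_setU1 in_setD1 uw uC orbT.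
rewrite -hX /X in_setU1 in_setD1 eqxx /= orbF => /eqP uv.
by move: vC; rewrite -uv uC.
Qed.

Lemma K'E : [set A | kcl W' A] = [set A | kcl W A] :|: [set X u | u in C].
Proof.
apply/setP => A; rewrite !inE; apply/idP/idP.
  case/kcl'_cases => [[_ ->] // | [u uC ->]].
  by apply/orP; right; apply/imsetP; exists u.
case/orP => [/kcl_W_W' // | /imsetP [u uC ->]]; exact: X_kcl.
Qed.

Lemma card_K' : #|[set A | kcl W' A]| = #|[set A | kcl W A]| + k.
Proof.
rewrite K'E cardsU.
have -> : [set A | kcl W A] :&: [set X u | u in C] = set0.
  apply/setP => A; rewrite !inE; apply/negP => /andP [/kcl_notv hA /imsetP [u _ hu]].
  by move: hA; rewrite hu vX.
rewrite cards0 subn0 card_in_imset; last exact: X_inj.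
by case/andP: hC => /eqP ->.
Qed.

Lemma S_v S : kclique e k.+1 S -> S \subset W' -> v \in S -> S = v |: C.
Proof.
case/andP => /eqP cS clS sS vS.
have h := sub_v clS sS vS.
have : S :\ v == C.
  rewrite eqEcard h /=; case/andP: hC => /eqP ->.
  by have := cardsD1 v S; rewrite vS cS /=; lia.
by move/eqP => <-; rewrite setD1K.
Qed.

Lemma pi_kcl A : kcl W' A -> kcl W (pi A).
Proof.
rewrite /pi; case: ifP => vA.
  by move=> _; rewrite /kcl hC hCW.
case/kcl'_cases => [[] // | [u _ hu]]; by rewrite hu vX in vA.
Qed.

Lemma sub_sigma_pi A : kclique e k A -> A \subset v |: C -> pi A = C.
Proof.
move=> /andP [/eqP cA _] sA; rewrite /pi; case: ifP => // vA.
apply/eqP; rewrite eqEcard.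
have -> : A \subset C.
  apply/subsetP => x xA; move: (subsetP sA x xA); rewrite in_setU1.
  by case: eqP => // xv; rewrite xv vA in xA.
have /andP [/eqP cC _] := hC. by rewrite cC cA leqnn.
Qed.

Lemma step_v A B : stepW W' A B -> v \in A -> kclique e k B -> pi B = C.
Proof.
case/existsP => S /and4P [h1 h2 h3 h4] vA kB.
have vS : v \in S by apply: (subsetP h3).
rewrite (S_v h1 h2 vS) in h4; exact: sub_sigma_pi.
Qed.

Lemma step_proj A B : kcl W' A -> kcl W' B -> stepW W' A B ->
  pi A = pi B \/ stepW W (pi A) (pi B).
Proof.
move=> kA kB hs; case/existsP: (hs) => S /and4P [h1 h2 h3 h4].
case vS: (v \in S).
  rewrite (S_v h1 h2 vS) in h3 h4.
  case/andP: kA => kA _; case/andP: kB => kB _.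
  by left; rewrite !sub_sigma_pi.
have vA : v \notin A by apply: contraFN vS; apply: (subsetP h3).
have vB : v \notin B by apply: contraFN vS; apply: (subsetP h4).
right; rewrite /pi (negPf vA) (negPf vB); apply/existsP; exists S.
rewrite h1 h3 h4 !andbT /=.
apply/subsetP => x xS; move: (subsetP h2 x xS); rewrite in_setU1.
by case: eqP => // xv; rewrite xv vS in xS.
Qed.

Lemma walk_proj m A B : walk W' m A B ->
  exists2 m', m' <= m & walk W m' (pi A) (pi B).
Proof.
elim: m A => [|m IH] A /=.
  case/andP => kA /eqP <-; exists 0 => //; by rewrite /= pi_kcl // eqxx.
case/andP => kA /existsP [Y /andP [hs hw]].
have /andP [kY kB] := walk_kcl hw.
case: (IH Y hw) => m' hm' hw'.
case: (step_proj kA kY hs) => [-> | hs'].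
  by exists m' => //; apply: leqW.
exists m'.+1 => //=; rewrite pi_kcl //=; apply/existsP; exists (pi Y); by rewrite hs'.
Qed.

Lemma pi_id A : kcl W A -> pi A = A.
Proof. by move/kcl_notv => h; rewrite /pi (negPf h). Qed.

Lemma isdist_old A B d : kcl W A -> kcl W B -> isdist W A B d -> isdist W' A B d.
Proof.
move=> kA kB [hw hmin]; split; first by apply: walk_mono hw; rewrite subsetUr.
move=> m /walk_proj [m' hm']; rewrite !pi_id // => /hmin h; exact: leq_trans h hm'.
Qed.

Lemma step_XC u : u \in C -> stepW W' (X u) C.
Proof.
move=> uC; apply/existsP; exists (v |: C).
by rewrite sigma_clique sigma_sub X_sub subsetUr.
Qed.

Lemma isdist_new u B d : u \in C -> kcl W B -> isdist W C B d -> isdist W' (X u) B d.+1.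
Proof.
move=> uC kB [hw hmin]; split.
  rewrite /= X_kcl //=; apply/existsP; exists C; rewrite step_XC //.
  by apply: walk_mono hw; rewrite subsetUr.
case => [|m] /=.
  case/andP => _ /eqP hXB; move: (kcl_notv kB); by rewrite -hXB vX.
case/andP => _ /existsP [Y /andP [hs hw']].
have /andP [/andP [kY _] _] := walk_kcl hw'.
have piY := step_v hs (vX u) kY.
case: (walk_proj hw') => m' hm'; rewrite piY (pi_id kB) => /hmin h.
by rewrite ltnS; apply: leq_trans h hm'.
Qed.

Lemma isdist_XX u w : u \in C -> w \in C -> u != w -> isdist W' (X u) (X w) 1.
Proof.
move=> uC wC uw; split.
  rewrite /= X_kcl //=; apply/existsP; exists (X w); rewrite X_kcl // eqxx andbT /=.
  rewrite andbT; apply/existsP; exists (v |: C); by rewrite sigma_clique sigma_sub !X_sub.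
case => [|m] // /= /andP [_ /eqP /X_inj] h; by rewrite h ?eqxx in uw.
Qed.


Lemma inv_step t : kinv e k W t -> kinv e k W' t.+1.
Proof.
case=> hcard hK hdist hgood.
have hW'card : #|W'| = t.+1 + k by rewrite /W' cardsU1 hvW hcard.
have hTcard : #|W'| <= #|T| by apply: max_card.
have bnd d : d <= t.+1 -> d < #|T|.
  move=> hd; apply: leq_trans hTcard; rewrite hW'card; lia.
have dW' A B d : isdist W' A B d -> d <= t.+1 -> distW e k W' A B = d.
  by move=> h hd; apply: distW_eq h (bnd _ hd).
have dW A B d : isdist W A B d -> d <= t -> distW e k W A B = d.
  by move=> h hd; apply: distW_eq h (bnd _ (leqW hd)).
have hKC : kcl W C by rewrite /kcl hC hCW.
split => //.
- by rewrite /Kset card_K' hK /cnt; lia.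
- move=> A B /kcl'_cases [[_ kA] | [u uC ->]] /kcl'_cases [[_ kB] | [w wC ->]].
  + case: (hdist A B kA kB) => d hd dt; exists d; [exact: isdist_old | exact: leqW].
  + case: (hdist C A hKC kA) => d hd dt; exists d.+1; last by [].
    by apply: isdist_sym; apply: isdist_new.
  + case: (hdist C B hKC kB) => d hd dt; exists d.+1; last by [].
    by apply: isdist_new.
  + case: (eqVneq u w) => [<- | uw].
      by exists 0 => //; apply: isdist0; apply: X_kcl.
    by exists 1; [apply: isdist_XX | ].
have old_eq A B : kcl W A -> kcl W B -> distW e k W' A B = distW e k W A B.
  move=> kA kB; case: (hdist A B kA kB) => d hd dt.
  rewrite (dW _ _ _ hd dt) (dW' _ _ d) //; [exact: isdist_old | exact: leqW].
have new_eq u A : u \in C -> kcl W A -> distW e k W' (X u) A = (distW e k W C A).+1.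
  move=> uC kA; case: (hdist C A hKC kA) => d hd dt.
  rewrite (dW _ _ _ hd dt) (dW' _ _ d.+1) //; exact: isdist_new.
move=> c tau htau.
set K0 := Kset e k W.
pose tau0 := fun i : 'I_#|K0| => (enum_val i : {set T}).
have henum0 : enumW e k W tau0.
  split; first exact: enum_val_inj.
  move=> A; apply/idP/idP.
    move=> hA; apply/codomP; exists (enum_rank_in hA A); by rewrite /tau0 enum_rankK_in.
  by case/codomP => i ->; apply: enum_valP.
have kt0 a : kcl W (tau0 a) by have := enum_valP a; rewrite inE.
have hg0 := hgood _ _ henum0.
have hCK0 : C \in K0 by rewrite inE.
pose iC := enum_rank_in hCK0 C.
have tau0C : tau0 iC = C by rewrite /tau0 enum_rankK_in.
pose xs := enum C.
have sxs : size xs = k by rewrite /xs -cardE; case/andP: hC => /eqP.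
pose xC (j : 'I_k) := nth v xs j.
have xCC j : xC j \in C by rewrite -mem_enum mem_nth // sxs.
have xC_inj : injective xC.
  move=> a b /eqP; rewrite nth_uniq ?sxs ?enum_uniq // => /eqP; apply: val_inj.
pose sigma (i : 'I_(#|K0| + k)) :=
  match split i with inl a => tau0 a | inr b => X (xC b) end.
have hc : c = #|K0| + k by rewrite (card_enumW htau) /Kset card_K'.
subst c.
have sig_kcl i : sigma i \in Kset e k W'.
  rewrite inE /sigma; case: (split i) => a; [exact: kcl_W_W' | exact: X_kcl].
have sig_inj : injective sigma.
  move=> i j; rewrite /sigma -{2}(splitK i) -{2}(splitK j).
  case: (split i) => a; case: (split j) => b.
  - by move/enum_val_inj => ->.
  - by move=> h; have := kcl_notv (kt0 a); rewrite h vX.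
  - by move=> h; have := kcl_notv (kt0 b); rewrite -h vX.
  - by move/(X_inj (xCC a) (xCC b))/xC_inj => ->.
have hf i : exists j, tau j == sigma i.
  have := sig_kcl i; rewrite (proj2 htau) => /codomP [j hj]; exists j; by rewrite hj.
pose f i := odflt i [pick j | tau j == sigma i].
have hfE i : tau (f i) = sigma i.
  rewrite /f; case: pickP => [j /eqP // | /= h].
  by case: (hf i) => j hj; rewrite h in hj.
have f_inj : injective f by move=> i j hij; apply: sig_inj; rewrite -!hfE hij.
pose s := perm f_inj.
apply: (good_perm (s := s)).
have -> : (\matrix_(i, j) DmatW e k W' tau (s i) (s j) =
  block_mx (DmatW e k W tau0)
    (\matrix_(i < #|K0|, j < k) (DmatW e k W tau0 i iC + 1))
    (\matrix_(i < k, j < #|K0|) (DmatW e k W tau0 iC j + 1))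
    (\matrix_(i < k, j < k) ((i != j)%:R)))%R.
  apply/matrixP => i j; rewrite mxE !(DmatW_E _ _ hk htau) !permE !hfE.
  rewrite -(splitK i) -(splitK j) /sigma !unsplitK.
  case: (split i) => a; case: (split j) => b => /=;
    rewrite ?block_mxEul ?block_mxEur ?block_mxEdl ?block_mxEdr ?mxE
      ?(DmatW_E _ _ hk henum0) ?tau0C.
  - case: eqP => [-> | _]; last by rewrite old_eq.
    by rewrite distW_refl //; apply: kcl_W_W'.
  - rewrite distW_sym new_eq //; case: eqP => [-> | _]; last by rewrite -addn1 PoszD [in RHS]distW_sym.
    by rewrite tau0C distW_refl.
  - rewrite new_eq //; case: eqP => [<- | _]; last by rewrite -addn1 PoszD.
    by rewrite tau0C distW_refl.
  - case: (eqVneq a b) => [<- | ab].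
      by rewrite distW_refl //; apply: X_kcl.
    rewrite (dW' _ _ 1) //; apply: isdist_XX => //.
    by apply: contra ab => /eqP /xC_inj ->.
apply: good_step => //; by rewrite mxE eqxx.
Qed.

End Step.
Section Main.
Variables (T : finType) (e : rel T) (esym : symmetric e) (k : nat) (hk : 0 < k).

Lemma kstep_stepW A B : kstep e k A B = stepW e k [set: T] A B.
Proof.
apply/existsP/existsP => -[S hS]; exists S; move: hS.
  by case/and3P => -> -> ->; rewrite subsetT.
by case/and4P => -> _ -> ->.
Qed.

Lemma kwalk_walk m A B : kwalk e k A B m = walk e k [set: T] m A B.
Proof.
elim: m A => [|m IH] A.
  apply/existsP/idP.
    move=> [s]; case: s => [[|Y s'] //= _]; by rewrite /kcl subsetT !andbT /=.
  rewrite /= /kcl subsetT => /andP [/andP [h1 _] h2]; exists [tuple]; by rewrite /= h1 h2.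
apply/existsP/idP.
  move=> [s]; case: s => [[|Y s'] //= hs] /and4P [kA /andP[kY alls'] /andP [hstep hpath] hlast].
  rewrite /kcl kA subsetT /=; apply/existsP; exists Y; rewrite -kstep_stepW hstep /=.
  rewrite -IH; apply/existsP; exists (Tuple hs); by rewrite /= kY alls' hpath hlast.
rewrite -[walk _ _ _ _ _ _]/(kcl e k setT A && [exists Y, stepW e k setT A Y && walk e k setT m Y B]).
case/andP => /andP [kA _] /existsP [Y /andP [hst]]; rewrite -IH => /existsP [s' /and4P [kY h2 h3 h4]].
exists (cons_tuple Y s'); by rewrite /= kA kY h2 kstep_stepW hst h3 h4.
Qed.

Lemma kdist_distW A B : kdist e k A B = distW e k [set: T] A B.
Proof. by apply: eq_find => m; rewrite kwalk_walk. Qed.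


Lemma inv_base V : kclique e k V -> kinv e k V 0.
Proof.
move=> hV.
have hK A : kcl e k V A = (A == V).
  apply/idP/idP => [/andP [/andP [/eqP cA _] sAV] | /eqP ->]; last by rewrite /kcl hV subxx.
  by rewrite eqEcard sAV /=; case/andP: hV => /eqP ->; rewrite cA leqnn.
have hKset : Kset e k V = [set V] by apply/setP => A; rewrite !inE hK.
split.
- by case/andP: hV => /eqP ->.
- by rewrite hKset cards1 /cnt mul0n addn0.
- move=> A B; rewrite !hK => /eqP -> /eqP ->; exists 0 => //; apply: isdist0; by rewrite hK.
move=> c tau htau.
have hc : c = 1 by rewrite (card_enumW htau) hKset cards1.
subst c.
exists 1%:M%R, 1%:M%R; split.
- by left; rewrite det1.
- by left; rewrite det1.
- by rewrite mul1mx; apply/matrixP => i j; rewrite !mxE (ord1 i).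
- by rewrite trmx1 mul1mx; apply/matrixP => i j; rewrite !mxE (ord1 i).
by rewrite mul1mx mulmx1; apply/matrixP => i j; rewrite !mxE (ord1 i) (ord1 j) eqxx.
Qed.

Lemma inv_ktree W : ktree_on e k W -> exists t, kinv e k W t.
Proof.
elim => [V hV | W' v _ [t IH] hv [C /andP [hC hCW] hN]].
  by exists 0; apply: inv_base.
by exists t.+1; apply: (inv_step esym hk hv hC hCW hN IH).
Qed.

End Main.

Local Open Scope ring_scope.

Lemma unimod_unit c (P : 'M[int]_c) : unimod P -> P \in unitmx.
Proof. by rewrite unitmxE => -[] ->; rewrite ?unitr1 ?unitrN1. Qed.

Lemma unimod_inv c (P : 'M[int]_c) : unimod P -> unimod (invmx P).
Proof. by rewrite /unimod det_inv => -[] ->; rewrite ?invr1 ?invrN1; [left | right]. Qed.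

Theorem mainTheorem2 (k n : nat) (hk : (1 <= k)%N) (hn : (k + 2 <= n)%N)
  (e e' : rel 'I_n)
  (esym : symmetric e) (eirr : irreflexive e)
  (esym' : symmetric e') (eirr' : irreflexive e')
  (hT : is_ktree e k) (hT' : is_ktree e' k)
  (c : nat) (tau tau' : 'I_c -> {set 'I_n})
  (htau : kclique_enum e k tau) (htau' : kclique_enum e' k tau') :
  exists P Q : 'M[int]_c,
    (\det P = 1 \/ \det P = -1) /\ (\det Q = 1 \/ \det Q = -1) /\
    kdistmx e k tau = P *m kdistmx e' k tau' *m Q.
Proof.
have [t [hcard _ _ hgood]] := inv_ktree esym hk hT.
have [t' [hcard' _ _ hgood']] := inv_ktree esym' hk hT'.
have ht : t = t' by apply/eqP; rewrite -(eqn_add2r k) -hcard -hcard'.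
subst t'.
have hen (f : rel 'I_n) (s : 'I_c -> {set 'I_n}) : kclique_enum f k s -> enumW f k setT s.
  case=> inj h; split => // A; by rewrite inE /kcl subsetT andbT h.
have hD (f : rel 'I_n) (s : 'I_c -> {set 'I_n}) : DmatW f k setT s = kdistmx f k s.
  by apply/matrixP => i j; rewrite !mxE kdist_distW.
case: (hgood _ _ (hen _ _ htau)) => P [Q [uP uQ _ _ hM]].
case: (hgood' _ _ (hen _ _ htau')) => P' [Q' [uP' uQ' _ _ hM']].
rewrite hD in hM; rewrite hD in hM'.
exists (invmx P *m P'), (Q' *m invmx Q); split; [|split].
- exact: unimodM (unimod_inv uP) uP'.
- exact: unimodM uQ' (unimod_inv uQ).
have E : kdistmx e k tau = invmx P *m (P *m kdistmx e k tau *m Q) *m invmx Q.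
  by rewrite -mulmxA mulmxK ?unimod_unit // mulKmx ?unimod_unit.
by rewrite E hM -hM' !mulmxA.
Qed.
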